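(* Let $n\ge2$, $N=\binom n2$ and $1\le M\le N-1$. Let $H$ be the graph whose vertices are the labeled graphs on $[n]$ with exactly $M$ edges, two graphs being adjacent iff one is obtained from the other by replacing one edge by one non-edge, and let $m_G(G')=\frac{1}{M(N-M)+1}$ if $G'=G$ or $G'$ is adjacent to $G$ in $H$, and $0$ otherwise. Then for all distinct $G_1,G_2\in V(H)$, \[\kappa(G_1,G_2)\ge\frac{N}{M(N-M)+1}.\]
   Context: For a graph $H$ with random walk $m$ (each $m_x$ a probability distribution supported on $x$ and its neighbors), $d$ the graph distance on $H$, the transportation distance is $W(m_1,m_2)=\inf_A\sum_{x,y}A(x,y)d(x,y)$ over couplings $A$ of $m_1,m_2$ (i.e. $\sum_yA(x,y)=m_1(x)$, $\sum_xA(x,y)=m_2(y)$), and the Ollivier Ricci curvature is $\kappa(x,y)=1-W(m_x,m_y)/d(x,y)$. *)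

(* Defs.v *)
From mathcomp Require Import all_boot.
From Stdlib Require Import Reals ClassicalEpsilon.

Set Implicit Arguments.
Unset Strict Implicit.
Unset Printing Implicit Defensive.

Definition edge (n : nat) := {e : {set 'I_n} | #|e| == 2}.

Definition Vtx (n M : nat) := {G : {set edge n} | #|G| == M}.

Definition adjHb (n M : nat) (G G' : Vtx n M) : bool :=
  [exists e : edge n, [exists f : edge n,
     [&& e \in val G, f \notin val G & val G' == (val G :\ e) :|: [set f]]]].

Fixpoint reachH (n M : nat) (k : nat) (G G' : Vtx n M) : bool :=
  match k with
  | 0 => G == G'
  | k'.+1 => [exists Z : Vtx n M, reachH k' G Z && adjHb Z G']
  end.

(* Graph distance on H: least k with a walk of length k (a shortest path in a
   graph with #|V| vertices has length < #|V|; value #|V| if unreachable,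
   which never happens since H is connected). *)
Definition distH (n M : nat) (G G' : Vtx n M) : nat :=
  find (fun k => reachH k G G') (iota 0 #|{: Vtx n M}|).

Definition mH (n M : nat) (G G' : Vtx n M) : R :=
  if (G' == G) || adjHb G G'
  then (/ INR (M * ('C(n, 2) - M) + 1))%R else 0%R.

Definition sumR (T : finType) (F : T -> R) : R := \big[Rplus/0%R]_(x : T) F x.

Definition coupling (T : finType) (m1 m2 : T -> R) (A : T -> T -> R) : Prop :=
  (forall x y, (0 <= A x y)%R) /\
  (forall x, sumR (fun y => A x y) = m1 x) /\
  (forall y, sumR (fun x => A x y) = m2 y).

Definition transport_cost (T : finType) (d : T -> T -> nat) (A : T -> T -> R) : R :=
  sumR (fun x => sumR (fun y => (A x y * INR (d x y))%R)).

Definition is_glb (S : R -> Prop) (w : R) : Prop :=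
  (forall c, S c -> (w <= c)%R) /\
  (forall w', (forall c, S c -> (w' <= c)%R) -> (w' <= w)%R).

Definition transW (T : finType) (d : T -> T -> nat) (m1 m2 : T -> R) : R :=
  epsilon (inhabits 0%R)
    (is_glb (fun c => exists A, coupling m1 m2 A /\ c = transport_cost d A)).

Definition kappaH (n M : nat) (G1 G2 : Vtx n M) : R :=
  (1 - transW (@distH n M) (mH G1) (mH G2) / INR (distH G1 G2))%R.

(* Main.v *)
From Stdlib Require Import Reals ClassicalEpsilon Lra.
Require Import Defs.
From HB Require Import structures.
From mathcomp Require Import all_boot all_order ssralg ssrnum.
From mathcomp Require Import Rstruct zify ring.

Set Implicit Arguments.
Unset Strict Implicit.
Unset Printing Implicit Defensive.
Import Order.TTheory GRing.Theory Num.Theory.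

Section Comb.
Variables n M : nat.
Local Notation E := (edge n).
Local Notation V := (Vtx n M).

Definition swapS (S : {set E}) (e f : E) : {set E} := S :\ e :|: [set f].

Lemma card_swapS (S : {set E}) (e f : E) : e \in S -> f \notin S -> #|swapS S e f| = #|S|.
Proof.
move=> eS fS; rewrite /swapS setUC cardsU1 !inE negb_and fS orbT /=.
by rewrite [in RHS](cardsD1 e) eS.
Qed.

Definition swapV (X : V) (e f : E) : V := insubd X (swapS (val X) e f).

Lemma val_swapV (X : V) (e f : E) : e \in val X -> f \notin val X ->
  val (swapV X e f) = swapS (val X) e f.
Proof.
move=> eX fX; rewrite /swapV insubdK // -topredE /= card_swapS //.
exact: (valP X).
Qed.

Lemma adjP (G G' : V) : reflect (exists e f, [/\ e \in val G, f \notin val G &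
   val G' = swapS (val G) e f]) (adjHb G G').
Proof.
apply: (iffP existsP) => [[e /existsP[f /and3P[eG fG /eqP h]]]|[e [f [eG fG h]]]].
  by exists e, f.
by exists e; apply/existsP; exists f; rewrite eG fG h eqxx.
Qed.

Lemma swapS_inj (S : {set E}) (e f e' f' : E) : e \in S -> f \notin S -> e' \in S -> f' \notin S ->
  swapS S e f = swapS S e' f' -> e = e' /\ f = f'.
Proof.
move=> eS fS e'S f'S h.
have : f \in swapS S e' f' by rewrite -h /swapS !inE eqxx orbT.
rewrite /swapS !inE => /orP[/andP[_ fS']|/eqP ->]; first by rewrite fS' in fS.
split=> //; apply/eqP; apply/negPn/negP => ne.
have : e \in swapS S e f by rewrite h /swapS !inE ne eS.
rewrite /swapS !inE eqxx /= => /eqP efe; by rewrite -efe eS in fS.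
Qed.

Definition dd (X Y : V) := #|val X :\: val Y|.

Lemma dd_sym X Y : dd X Y = dd Y X.
Proof.
by rewrite /dd !cardsD setIC (eqP (valP X)) (eqP (valP Y)).
Qed.

Lemma dd_tri X Y Z : dd X Z <= dd X Y + dd Y Z.
Proof.
rewrite /dd; apply: leq_trans (leq_card_setU _ _); apply: subset_leq_card.
apply/subsetP => x; rewrite !inE => /andP[nZ iX]; rewrite nZ iX.
by case: (x \in val Y).
Qed.

Lemma dd0 X Y : dd X Y = 0 -> X = Y.
Proof.
rewrite /dd => /eqP; rewrite cards_eq0 setD_eq0 => sub; apply: val_inj; apply/eqP.
by rewrite eqEcard sub (eqP (valP X)) (eqP (valP Y)) leqnn.
Qed.

Lemma ddxx X : dd X X = 0.
Proof. by rewrite /dd setDv cards0. Qed.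

Lemma dd_adj Z Y : adjHb Z Y -> dd Z Y <= 1.
Proof.
case/adjP => e [f [eZ fZ hY]]; rewrite /dd hY; apply: (leq_trans _ (eq_leq (cards1 e))); apply: subset_leq_card.
apply/subsetP => x; rewrite /swapS !inE; case: (x =P e) => //= _.
by case/andP => /norP[h _] h'; rewrite h' in h.
Qed.

Lemma reach_dd j X Y : reachH j X Y -> dd X Y <= j.
Proof.
elim: j Y => [|j IH] Y /=; first by move/eqP=> ->; rewrite ddxx.
case/existsP => Z /andP[/IH h1 /dd_adj h2].
by apply: leq_trans (dd_tri X Z Y) _; rewrite -addn1 leq_add.
Qed.

Lemma dd_reach j X Y : dd X Y = j -> reachH j X Y.
Proof.
elim: j Y => [|j IH] Y /=; first by move/dd0 ->.
move=> hd.
have : 0 < dd X Y by rewrite hd.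
rewrite /dd card_gt0 => /set0Pn [e]; rewrite inE => /andP[eY eX].
have : 0 < dd Y X by rewrite dd_sym hd.
rewrite /dd card_gt0 => /set0Pn [f]; rewrite inE => /andP[fX fY].
apply/existsP; exists (swapV Y f e).
have hZ := val_swapV fY eY.
have nef : e != f by apply: contraNneq eY => ->.
apply/andP; split.
  apply: IH; rewrite /dd hZ.
  have -> : val X :\: swapS (val Y) f e = (val X :\: val Y) :\ e.
    apply/setP => x; rewrite /swapS !inE.
    case: (x =P e) => [->|/eqP ne]; first by rewrite orbT.
    rewrite ?(negbTE ne) ?orbF /=; case: (x =P f) => [->|_] /=; last by [].
    by rewrite ?(negbTE fX) ?andbF.
  by move: hd; rewrite /dd (cardsD1 e) !inE eY eX => -[].
apply/adjP; exists e, f; rewrite hZ /swapS !inE !eqxx /= (eq_sym f e) (negbTE nef) /=.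
rewrite orbT; split=> //; apply/setP => x; rewrite !inE.
case: (x =P f) => [->|_] /=; first by rewrite ?fY ?orbT.
case: (x =P e) => [->|_] /=; by rewrite ?(negbTE eY) ?orbF.
Qed.


Lemma dd_step j X Y : dd X Y = j.+1 -> exists Z, dd X Z = j /\ adjHb Z Y.
Proof.
move=> hd.
have : 0 < dd X Y by rewrite hd.
rewrite /dd card_gt0 => /set0Pn [e]; rewrite inE => /andP[eY eX].
have : 0 < dd Y X by rewrite dd_sym hd.
rewrite /dd card_gt0 => /set0Pn [f]; rewrite inE => /andP[fX fY].
exists (swapV Y f e).
have hZ := val_swapV fY eY.
have nef : e != f by apply: contraNneq eY => ->.
split.
  rewrite /dd hZ.
  have -> : val X :\: swapS (val Y) f e = (val X :\: val Y) :\ e.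
    apply/setP => x; rewrite /swapS !inE.
    case: (x =P e) => [->|/eqP ne]; first by rewrite orbT.
    rewrite ?(negbTE ne) ?orbF /=; case: (x =P f) => [->|_] /=; last by [].
    by rewrite ?(negbTE fX) ?andbF.
  by move: hd; rewrite /dd (cardsD1 e) !inE eY eX => -[].
apply/adjP; exists e, f; rewrite hZ /swapS !inE !eqxx /= (eq_sym f e) (negbTE nef) /=.
rewrite orbT; split=> //; apply/setP => x; rewrite !inE.
case: (x =P f) => [->|_] /=; first by rewrite ?fY ?orbT.
case: (x =P e) => [->|_] /=; by rewrite ?(negbTE eY) ?orbF.
Qed.

Lemma distH_le X Y : distH X Y <= dd X Y.
Proof.
have hp := dd_reach (erefl (dd X Y)).
rewrite /distH; case: (ltnP (dd X Y) #|{: V}|) => h.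
  rewrite leqNgt; apply/negP => /(before_find 0).
  by rewrite nth_iota // add0n hp.
by apply: leq_trans h; rewrite -{2}(size_iota 0 #|{: V}|) find_size.
Qed.

Lemma distH_ge X Y : dd X Y < #|{: V}| -> dd X Y <= distH X Y.
Proof.
move=> h; rewrite /distH.
case: (ltnP (find (fun k => reachH k X Y) (iota 0 #|{: V}|)) (size (iota 0 #|{: V}|))) => h2.
  have := nth_find 0 (a := fun k => reachH k X Y) (s := iota 0 #|{: V}|).
  rewrite has_find => /(_ h2); rewrite nth_iota; last by rewrite size_iota in h2.
  by rewrite add0n; apply: reach_dd.
by apply: leq_trans (ltnW h) _; rewrite size_iota in h2.
Qed.

Lemma card_edge : #|{: E}| = 'C(n, 2).
Proof.
rewrite card_sig -[n in 'C(n, 2)]card_ord -card_draws.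
by apply: eq_card => x; rewrite !inE.
Qed.

Definition swapP (G : V) (p : E * E) := swapV G p.1 p.2.

Lemma swapP_inj (G : V) : {in setX (val G) (~: val G) &, injective (swapP G)}.
Proof.
move=> [e f] [e' f'] /setXP[/= eG] + /setXP[/= e'G] +.
rewrite !inE => fG f'G /(congr1 val); rewrite /swapP !val_swapV //=.
by case/swapS_inj => // -> ->.
Qed.

Lemma adj_image (G : V) :
  [set X | adjHb G X] = swapP G @: setX (val G) (~: val G).
Proof.
apply/setP => X; rewrite inE; apply/adjP/imsetP.
  case=> e [f [eG fG hX]]; exists (e, f); first by rewrite inE /= eG inE.
  by apply: val_inj; rewrite /swapP val_swapV.
case=> [[e f]] /setXP[/= eG]; rewrite inE => fG ->.
by exists e, f; rewrite /swapP val_swapV.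
Qed.

Lemma card_adj (G : V) : #|[set X | adjHb G X]| = M * ('C(n, 2) - M).
Proof.
rewrite adj_image (card_in_imset (@swapP_inj G)) cardsX (eqP (valP G)).
by rewrite -card_edge -(cardsC (val G)) (eqP (valP G)) addKn.
Qed.

Lemma sum_adj (G : V) (F : V -> nat) :
  \sum_(X | adjHb G X) F X =
  \sum_(e in val G) \sum_(f in ~: val G) F (swapV G e f).
Proof.
rewrite pair_big_dep /=.
have -> : \sum_(X | adjHb G X) F X = \sum_(X in [set X | adjHb G X]) F X.
  by apply: eq_bigl => X; rewrite inE.
rewrite adj_image big_imset; last exact: swapP_inj.
by apply: eq_bigl => -[e f]; rewrite inE.
Qed.

End Comb.

Section Adj.
Variables n M : nat.
Local Notation E := (edge n).
Local Notation V := (Vtx n M).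

Lemma adj_neq (G X : V) : adjHb G X -> X != G.
Proof.
case/adjP => e [f [eG fG hX]]; apply/negP => /eqP XG.
by move: fG; rewrite -XG hX /swapS !inE eqxx orbT.
Qed.

Lemma adj_sym (X Y : V) : adjHb X Y -> adjHb Y X.
Proof.
case/adjP => e [f [eX fX hY]]; apply/adjP; exists f, e.
have nef : e != f by apply: contraNneq fX => <-.
rewrite hY /swapS !inE !eqxx orbT (negbTE nef) eX /=; split=> //.
apply/setP => x; rewrite !inE.
case: (x =P e) => [->|_] /=; first by rewrite eX orbT.
case: (x =P f) => [->|_] /=; by rewrite ?(negbTE fX) ?orbF.
Qed.

Lemma sum_neq (T : finType) (A : {set T}) (a : T) :
  \sum_(e in A) (e != a) = #|A :\ a|.
Proof.
rewrite -sum1_card [RHS]big_mkcond [LHS]big_mkcond /=.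
by apply: eq_bigr => x _; rewrite !inE andbC; case: (x \in A); case: (x != a).
Qed.

Variables (G1 G2 : V) (a b : E).
Hypotheses (aG : a \in val G1) (bG : b \notin val G1)
  (hG2 : val G2 = swapS (val G1) a b).

Definition pi (x : E) := if x == a then b else if x == b then a else x.

Lemma nab : a != b.
Proof. by apply: contraNneq bG => <-. Qed.

Lemma piK : cancel pi pi.
Proof.
move=> x; rewrite /pi; case: (x =P a) => [->|xa].
  by rewrite eqxx eq_sym (negbTE nab).
case: (x =P b) => [->|xb]; first by rewrite eqxx.
by move/eqP/negbTE: xa => ->; move/eqP/negbTE: xb => ->.
Qed.

Lemma pi_eq x y : (pi x == y) = (x == pi y).
Proof.
apply/eqP/eqP => [<-|->]; by rewrite piK.
Qed.

Definition pis (S : {set E}) := [set x | pi x \in S].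

Lemma card_pis S : #|pis S| = #|S|.
Proof. exact: (card_preimset _ (can_inj piK)). Qed.

Lemma pisK S : pis (pis S) = S.
Proof. by apply/setP => x; rewrite !inE piK. Qed.

Lemma pis_swap S e f : pis (swapS S e f) = swapS (pis S) (pi e) (pi f).
Proof.
by apply/setP => x; rewrite /swapS !inE !pi_eq.
Qed.

Definition piV (X : V) : V := insubd X (pis (val X)).

Lemma val_piV X : val (piV X) = pis (val X).
Proof.
by rewrite /piV insubdK // -topredE /= card_pis; exact: (valP X).
Qed.

Lemma piVK X : piV (piV X) = X.
Proof. by apply: val_inj; rewrite !val_piV pisK. Qed.

Lemma piG1 : piV G1 = G2.
Proof.
apply: val_inj; rewrite val_piV hG2; apply/setP => x; rewrite /swapS !inE /pi.
case: (x =P a) => [->|/eqP xa].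
  by rewrite (negbTE bG) (negbTE nab).
case: (x =P b) => [->|/eqP xb]; first by rewrite aG ?eqxx ?orbT.
by rewrite orbF.
Qed.

Lemma piG2 : piV G2 = G1.
Proof. by rewrite -piG1 piVK. Qed.

Lemma adj_pi X Y : adjHb X Y -> adjHb (piV X) (piV Y).
Proof.
case/adjP => e [f [eX fX hY]]; apply/adjP; exists (pi e), (pi f).
by rewrite !val_piV !inE !piK hY pis_swap.
Qed.

Lemma adj_piE X Y : adjHb (piV X) (piV Y) = adjHb X Y.
Proof.
apply/idP/idP => [/adj_pi|/adj_pi //]; by rewrite !piVK.
Qed.

Lemma adj12 : adjHb G1 G2.
Proof. by apply/adjP; exists a, b. Qed.

Definition sigma (X : V) : V := if (X == G1) || (X == G2) then X else piV X.

Lemma sigmaK X : sigma (sigma X) = X.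
Proof.
rewrite {2}/sigma; case: ifP => [h|/norP[h1 h2]]; first by rewrite /sigma h.
rewrite /sigma.
have -> : (piV X == G1) = false by apply/negbTE; apply: contra h2 => /eqP h; rewrite -(piVK X) h piG1.
have -> : (piV X == G2) = false.
  by apply/negbTE; apply: contra h1 => /eqP h; rewrite -(piVK X) h piG2.
by rewrite piVK.
Qed.

Lemma S_sigma Y : ((sigma Y == G1) || adjHb G1 (sigma Y)) = ((Y == G2) || adjHb G2 Y).
Proof.
rewrite /sigma; case: (Y =P G1) => [->|/eqP h1] /=.
  by rewrite eqxx (adj_sym adj12) orbT.
case: (Y =P G2) => [->|/eqP h2] /=; first by rewrite adj12 orbT.
have -> : (piV Y == G1) = false by apply/negbTE; apply: contra h2 => /eqP h; rewrite -(piVK Y) h piG1.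
by rewrite -[in RHS]adj_piE piG2.
Qed.


Lemma dd_sigma e f : e \in val G1 -> f \notin val G1 ->
  dd (swapV G1 e f) (sigma (swapV G1 e f)) = (e != a) * (f != b).
Proof.
move=> eG fG; have hX := val_swapV eG fG.
case: (boolP ((e == a) && (f == b))) => [/andP[/eqP ea /eqP fb]|hne].
  have XG2 : swapV G1 e f = G2 by apply: val_inj; rewrite hX hG2 ea fb.
  by rewrite /sigma XG2 eqxx orbT ddxx ea fb eqxx.
have XG1 : (swapV G1 e f == G1) = false.
  apply/negbTE/negP => /eqP h; move: fG; rewrite -{1}h hX /swapS !inE eqxx orbT //.
have XG2 : (swapV G1 e f == G2) = false.
  apply/negbTE/negP => /eqP /(congr1 val); rewrite hX hG2 => /swapS_inj.
  case=> // ea fb; by move: hne; rewrite ea fb !eqxx.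
have af : a != f by apply: contraNneq fG => <-.
rewrite /sigma XG1 XG2 /= /dd val_piV hX.
have -> : swapS (val G1) e f :\: pis (swapS (val G1) e f) =
          [set x | (e != a) && (f != b) && (x == a)].
  apply/setP => x; rewrite /swapS !inE /pi.
  case: (x =P a) => [->|/eqP xa].
    rewrite (negbTE bG) aG (negbTE af) !andbF !andbT !orbF (eq_sym a e) (eq_sym b f).
    by rewrite andbC.
  case: (x =P b) => [->|/eqP xb].
    rewrite aG (negbTE af) (negbTE bG) /= andbF orbF andbT negbK andbF.
    by move: hne; rewrite (eq_sym e a) (eq_sym f b); case: (a == e); case: (b == f).
  by rewrite andNb andbF.
case: (e != a); case: (f != b) => /=.
- by apply: (etrans _ (cards1 a)); apply: eq_card => x; rewrite !inE.
- by apply: (etrans _ (cards0 E)); apply: eq_card => x; rewrite !inE.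
- by apply: (etrans _ (cards0 E)); apply: eq_card => x; rewrite !inE.
by apply: (etrans _ (cards0 E)); apply: eq_card => x; rewrite !inE.
Qed.

Lemma sum_sigma : \sum_(X | (X == G1) || adjHb G1 X) dd X (sigma X) =
   M.-1 * ('C(n, 2) - M).-1.
Proof.
rewrite (bigD1 G1) /=; last by rewrite eqxx.
have -> : sigma G1 = G1 by rewrite /sigma eqxx.
rewrite ddxx add0n (eq_bigl (fun X => adjHb G1 X)); last first.
  move=> X /=; case h: (adjHb G1 X); first by rewrite orbT (adj_neq h).
  by rewrite orbF andbN.
rewrite sum_adj.
rewrite (eq_bigr (fun e => (e != a) * \sum_(f in ~: val G1) (f != b))); last first.
  move=> e eG; rewrite big_distrr /=; apply: eq_bigr => f fG; apply: dd_sigma => //.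
  by rewrite inE in fG.
rewrite -big_distrl /= !sum_neq.
have h1 : #|val G1 :\ a| = M.-1.
  have hc := eqP (valP G1); rewrite (cardsD1 a) aG in hc.
  move: hc; set k := #|_ :\ a|; move=> hc; lia.
have h2 : #|~: val G1 :\ b| = ('C(n, 2) - M).-1.
  have hc := cardsC (val G1); rewrite (eqP (valP G1)) card_edge in hc.
  rewrite (cardsD1 b (~: val G1)) inE bG in hc.
  move: hc; set k := #|_ :\ b|; move=> hc; lia.
by rewrite h1 h2.
Qed.

End Adj.
Section WW.
Local Open Scope R_scope.

Lemma sumRE (T : finType) (F : T -> R) : sumR F = (\sum_(x : T) F x)%R.
Proof. by []. Qed.

Lemma cost_ge0 (T : finType) (d : T -> T -> nat) m1 m2 (A : T -> T -> R) :
  coupling m1 m2 A -> Rle 0 (transport_cost d A).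
Proof.
case=> A0 _; rewrite /transport_cost sumRE; apply/RleP.
apply: sumr_ge0 => x _; rewrite sumRE; apply: sumr_ge0 => y _.
apply: mulr_ge0; first exact/RleP.
by rewrite INRE ler0n.
Qed.

Lemma transW_le (T : finType) (d : T -> T -> nat) m1 m2 (A : T -> T -> R) :
  coupling m1 m2 A -> Rle (transW d m1 m2) (transport_cost d A).
Proof.
move=> cA.
set S := fun c => exists A, coupling m1 m2 A /\ c = transport_cost d A.
have ex : exists w, is_glb S w.
  have hb : bound (fun r => S (Ropp r)).
    exists 0 => x [B [cB hx]]; have := cost_ge0 d cB; lra.
  have hne : exists x, S (Ropp x).
    by exists (Ropp (transport_cost d A)); exists A; split=> //; rewrite Ropp_involutive.
  have [m [ub lub]] := completeness _ hb hne.
  exists (Ropp m); split.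
    move=> c Sc; have : Rle (Ropp c) m by apply: ub; rewrite Ropp_involutive.
    lra.
  move=> w' hw'; have : Rle m (Ropp w').
    by apply: lub => x Sx; have := hw' _ Sx; lra.
  lra.
have [lb _] := epsilon_spec (inhabits 0) _ ex.
by apply: lb; exists A.
Qed.


End WW.

Section Glue.
Local Open Scope ring_scope.

Lemma costE (T : finType) (d : T -> T -> nat) (A : T -> T -> R) :
  transport_cost d A = \sum_x \sum_y A x y * (d x y)%:R.
Proof.
rewrite /transport_cost sumRE; apply: eq_bigr => x _.
by rewrite sumRE; apply: eq_bigr => y _; rewrite INRE.
Qed.

Lemma glue (T : finType) (d : T -> T -> nat)
  (dtri : forall x y z, (d x z <= d x y + d y z)%N) (m1 m2 m3 : T -> R)
  (A B : T -> T -> R) :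
  coupling m1 m2 A -> coupling m2 m3 B ->
  exists C, coupling m1 m3 C /\
    Rle (transport_cost d C) (Rplus (transport_cost d A) (transport_cost d B)).
Proof.
case=> A0 [A1 A2] [B0 [B1 B2]].
have A0' : forall x y, 0 <= A x y by move=> x y; apply/RleP.
have B0' : forall x y, 0 <= B x y by move=> x y; apply/RleP.
have A2' : forall y, \sum_x A x y = m2 y by move=> y; rewrite -A2.
have B1' : forall y, \sum_z B y z = m2 y by move=> y; rewrite -B1.
have A1' : forall x, \sum_y A x y = m1 x by move=> x; rewrite -A1.
have B2' : forall z, \sum_y B y z = m3 z by move=> z; rewrite -B2.
have m2ge : forall y, 0 <= m2 y by move=> y; rewrite -A2'; apply: sumr_ge0.
have KA : forall x y, A x y / m2 y * m2 y = A x y.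
  move=> x y; have [h|h] := eqVneq (m2 y) 0; last by rewrite mulfVK.
  have -> : A x y = 0.
    apply: (@psumr_eq0P _ _ predT (fun x => A x y)) => //.
    by rewrite A2' h.
  by rewrite !mul0r.
have KB : forall y z, B y z / m2 y * m2 y = B y z.
  move=> y z; have [h|h] := eqVneq (m2 y) 0; last by rewrite mulfVK.
  have -> : B y z = 0.
    apply: (@psumr_eq0P _ _ predT (fun z => B y z)) => //.
    by rewrite B1' h.
  by rewrite !mul0r.
exists (fun x z => \sum_y A x y * B y z / m2 y).
split; [split; [|split]|].
- move=> x z; apply/RleP; apply: sumr_ge0 => y _.
  by apply: mulr_ge0; [apply: mulr_ge0|rewrite invr_ge0].
- move=> x; rewrite sumRE exchange_big /= -A1' ; apply: eq_bigr => y _.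
  rewrite (eq_bigr (fun z => (A x y / m2 y) * B y z)); last by move=> z _; ring.
  by rewrite -mulr_sumr B1' KA.
- move=> z; rewrite sumRE exchange_big /= -B2'; apply: eq_bigr => y _.
  rewrite (eq_bigr (fun x => (B y z / m2 y) * A x y)); last by move=> x _; ring.
  by rewrite -mulr_sumr A2' KB.
apply/RleP; rewrite !costE.
set F := fun x y z => A x y * B y z / m2 y.
have F0 : forall x y z, 0 <= F x y z.
  by move=> x y z; apply: mulr_ge0; [apply: mulr_ge0|rewrite invr_ge0].
apply: (@le_trans _ _ (\sum_x \sum_z \sum_y (F x y z * (d x y)%:R + F x y z * (d y z)%:R))).
  apply: ler_sum => x _; apply: ler_sum => z _; rewrite mulr_suml.
  apply: ler_sum => y _; rewrite -mulrDr; apply: ler_wpM2l; first exact: F0.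
  by rewrite -natrD ler_nat.
have -> : \sum_x \sum_z \sum_y (F x y z * (d x y)%:R + F x y z * (d y z)%:R) =
   \sum_x \sum_z \sum_y (F x y z * (d x y)%:R) + \sum_x \sum_z \sum_y (F x y z * (d y z)%:R).
  rewrite -big_split; apply: eq_bigr => x _; rewrite -big_split.
  by apply: eq_bigr => z _; rewrite -big_split.
apply: lerD; rewrite le_eqVlt; apply/orP; left; apply/eqP.
  apply: eq_bigr => x _; rewrite exchange_big; apply: eq_bigr => y _.
  rewrite (eq_bigr (fun z => (A x y / m2 y * (d x y)%:R) * B y z)); last first.
    by move=> z _; rewrite /F; ring.
  by rewrite -mulr_sumr B1' mulrAC KA.
rewrite exchange_big /=.
rewrite (eq_bigr (fun z => \sum_y \sum_x F x y z * (d y z)%:R)); last first.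
  by move=> z _; rewrite exchange_big.
rewrite exchange_big /=; apply: eq_bigr => y _; apply: eq_bigr => z _.
rewrite (eq_bigr (fun x => (B y z / m2 y * (d y z)%:R) * A x y)); last first.
  by move=> x _; rewrite /F; ring.
by rewrite -mulr_sumr A2' mulrAC KB.
Qed.

End Glue.

Section Main.
Variables n M : nat.
Local Notation E := (edge n).
Local Notation V := (Vtx n M).
Local Notation N := 'C(n, 2).

Definition cst := Rinv (INR (M * (N - M) + 1)).
Definition KK := (M.-1 * (N - M).-1)%N.
Local Open Scope ring_scope.

Lemma cst_ge0 : Rle 0 cst.
Proof.
rewrite /cst; left; apply: Rinv_0_lt_compat; rewrite plus_INR /=; have := pos_INR (M * (N - M)); lra.
Qed.

Lemma mH_ge0 (G X : V) : Rle 0 (mH G X).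
Proof. rewrite /mH; case: ifP => _; [exact: cst_ge0| lra]. Qed.

Lemma mHE (G X : V) : mH G X = if (X == G) || adjHb G X then cst else 0%R.
Proof. by []. Qed.

Lemma adj_coupling (G1 G2 : V) : adjHb G1 G2 ->
  exists A, coupling (mH G1) (mH G2) A /\
    Rle (transport_cost (@dd n M) A) (Rmult cst (INR KK)).
Proof.
case/adjP => a [b [aG bG hG2]].
pose s := sigma G1 G2 a b.
have sK := sigmaK aG bG hG2.
exists (fun X Y => if Y == s X then mH G1 X else 0%R).
split; [split; [|split]|].
- by move=> X Y; case: ifP => _; [exact: mH_ge0|exact: Rle_refl].
- move=> X; rewrite sumRE -big_mkcond /=.
  by rewrite (big_pred1 (s X)) // => Y.
- move=> Y; rewrite sumRE.
  rewrite (eq_bigr (fun X => if X == s Y then mH G1 X else 0%R)); last first.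
    move=> X _; congr (if _ then _ else _); apply/eqP/eqP => [->|->]; by rewrite /s sK.
  rewrite -big_mkcond /= (big_pred1 (s Y)) // !mHE.
  by rewrite (S_sigma aG bG hG2).
rewrite costE.
have -> : (\sum_X \sum_Y (if Y == s X then mH G1 X else 0%R) * (dd X Y)%:R =
   \sum_X mH G1 X * (dd X (s X))%:R)%R.
  apply: eq_bigr => X _; rewrite (bigD1 (s X)) //= eqxx big1 ?addr0 //.
  by move=> Y /negbTE ->; rewrite mul0r.
have -> : (\sum_X mH G1 X * (dd X (s X))%:R =
    cst * (\sum_(X | (X == G1) || adjHb G1 X) dd X (s X))%:R)%R.
  rewrite natr_sum mulr_sumr [RHS]big_mkcond /=; apply: eq_bigr => X _.
  by rewrite mHE; case: ifP => _ //; rewrite mul0r.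
rewrite (sum_sigma aG bG hG2) /KK INRE; exact: Rle_refl.
Qed.

Lemma main_ind j : forall X Y : V, dd X Y = j ->
  exists A, coupling (mH X) (mH Y) A /\
    Rle (transport_cost (@dd n M) A) (Rmult (INR j) (Rmult cst (INR KK))).
Proof.
elim: j => [|j IH] X Y hd.
  move: hd => /dd0 <-.
  exists (fun X' Y' => if Y' == X' then mH X X' else 0%R).
  split; [split; [|split]|].
  - by move=> X' Y'; case: ifP => _; [exact: mH_ge0|exact: Rle_refl].
  - by move=> X'; rewrite sumRE -big_mkcond /= (big_pred1 X').
  - move=> Y'; rewrite sumRE (eq_bigr (fun X' => if X' == Y' then mH X X' else 0%R)).
      by rewrite -big_mkcond /= (big_pred1 Y').
    by move=> X' _; rewrite eq_sym.
  rewrite costE big1 /=; first by rewrite Rmult_0_l; exact: Rle_refl.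
  move=> X' _; rewrite (bigD1 X') //= eqxx ddxx mulr0 add0r big1 // => Y' /negbTE ->.
  by rewrite mul0r.
have [Z [hXZ hZY]] := dd_step hd.
have [A1 [c1 h1]] := IH _ _ hXZ.
have [A2 [c2 h2]] := adj_coupling hZY.
have [C [cC hC]] := glue (@dd_tri n M) c1 c2.
exists C; split => //; rewrite S_INR.
move: h1 h2 hC; set t := Rmult cst (INR KK); set u := INR j.
move=> h1 h2 hC; apply: Rle_trans hC _.
have -> : Rmult (Rplus u 1) t = Rplus (Rmult u t) t by rewrite Rmult_plus_distr_r Rmult_1_l.
exact: Rplus_le_compat.
Qed.

End Main.

Theorem mainTheorem6 (n M : nat) (hn : (2 <= n)%N)
  (hM : (1 <= M <= 'C(n, 2) - 1)%N) (G1 G2 : Vtx n M) :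
  G1 <> G2 ->
  Rle (Rdiv (INR 'C(n, 2)) (INR (M * ('C(n, 2) - M) + 1))) (kappaH G1 G2).
Proof.
move=> neq.
set k := dd G1 G2.
have kpos : (0 < k)%N by rewrite lt0n; apply/eqP => /dd0.
have kM : (k <= M)%N.
  by rewrite -(eqP (valP G1)); apply: subset_leq_card; apply: subsetDl.
have hNM : (1 <= 'C(n, 2) - M)%N by lia.
have kV : (k < #|{: Vtx n M}|)%N.
  have h1 := card_adj G1.
  have h2 : (#|G1 |: [set X | adjHb G1 X]| <= #|{: Vtx n M}|)%N by apply: max_card.
  have G1n : (G1 \in [set X | adjHb G1 X]) = false.
    by rewrite inE; apply/negbTE/negP => /adj_neq; rewrite eqxx.
  rewrite cardsU1 G1n h1 in h2.
  have := leq_pmulr M hNM; lia.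
have dH : distH G1 G2 = k by apply/anti_leq; rewrite distH_le distH_ge.
have [A [cA hA]] := main_ind (erefl k).
have hW : Rle (transW (@distH n M) (mH G1) (mH G2)) (Rmult (INR k) (Rmult (cst n M) (INR (KK n M)))).
  apply: Rle_trans (transW_le _ cA) _; apply: Rle_trans _ hA.
  rewrite !costE; apply/RleP; apply: ler_sum => x _; apply: ler_sum => y _.
  apply: ler_wpM2l; first by case: cA => A0 _; apply/RleP.
  by rewrite ler_nat distH_le.
have hK : (KK n M + 'C(n, 2) = M * ('C(n, 2) - M) + 1)%N.
  have [m eM] : exists m, M = m.+1 by exists M.-1; lia.
  have [r eR] : exists r, ('C(n, 2) - M = r.+1)%N by exists ('C(n, 2) - M).-1; lia.
  have eN : 'C(n, 2) = (M + r.+1)%N by lia.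
  rewrite /KK eR eN eM /= !mulSn !mulnS; lia.
rewrite /kappaH dH.
move: hW; rewrite /cst.
have hD1 : Rplus (INR 'C(n, 2)) (INR (KK n M)) = INR (M * ('C(n, 2) - M) + 1).
  by rewrite -plus_INR -hK; congr INR; lia.
rewrite -hD1.
have kp : Rlt 0 (INR k) by apply: lt_0_INR; lia.
have Kp := pos_INR (KK n M).
have Np : Rlt 0 (INR 'C(n, 2)).
  have : (0 < 'C(n, 2))%N by rewrite bin_gt0.
  move=> h; apply: lt_0_INR; lia.
move=> hW; move: (transW _ _ _) (INR (KK n M)) (INR 'C(n, 2)) (INR k) kp Kp Np hW.
move=> W K NN kk kp Kp Np hW.
have hw : Rle (Rdiv W kk) (Rmult (Rinv (Rplus NN K)) K).
  apply: (Rmult_le_reg_r kk) => //.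
  have -> : Rmult (Rdiv W kk) kk = W.
    by rewrite /Rdiv Rmult_assoc Rinv_l ?Rmult_1_r //; lra.
  by rewrite Rmult_comm.
have e : Rplus (Rmult NN (Rinv (Rplus NN K))) (Rmult (Rinv (Rplus NN K)) K) = IZR 1%Z.
  rewrite (Rmult_comm (Rinv _) K) -Rmult_plus_distr_r Rinv_r //; lra.
move: hw e; rewrite /Rdiv; lra.
Qed.
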